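(* Let $B \in \mathbb{R}^{n \times m}$, $c \in \mathbb{R}^m_>$, and let $C = C_1 \times \cdots \times C_\ell \subseteq \mathbb{R}^m_>$ be a nonempty coefficient cone with cones $C_i \subseteq \mathbb{R}^{m_i}_>$, $m_1 + \cdots + m_\ell = m$. Let $P$, $D$, $L$, $I$, $M$ be as in the context, let $M^* \in \mathbb{R}^{(m-\ell)\times n}$ be any generalized inverse of $M$ (i.e. $M M^* M = M$), and set $E = I\,M^* \in \mathbb{R}^{m \times n}$. Then the solution set \[ Z_c = \{ x \in \mathbb{R}^n_> \mid (c \circ x^B) \in C \} \] can be written as \[ Z_c = \{ (y \circ c^{-1})^E \mid y \in Y_c \} \circ e^{L^\perp}, \qquad Y_c = \{ y \in P \mid y^z = c^z \text{ for all } z \in D \}. \]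
   Context: Notation: $\mathbb{R}_>$ denotes the positive reals. For $x \in \mathbb{R}^n_>$ and $y \in \mathbb{R}^n$, $x^y = \prod_{i=1}^n x_i^{y_i}$; for $Y = (y^1,\ldots,y^m) \in \mathbb{R}^{n\times m}$, $x^Y \in \mathbb{R}^m_>$ is given by $(x^Y)_j = x^{y^j}$. The symbol $\circ$ denotes the componentwise product, $c^{-1}$ the componentwise inverse, and for a set $S \subseteq \mathbb{R}^n_>$ and a subspace $V$, $S \circ e^{V} = \{ s \circ e^v \mid s \in S, v \in V\}$ with $e^v$ componentwise. A cone here means a set closed under multiplication by positive scalars. The partition $m = m_1+\cdots+m_\ell$ splits indices $\{1,\ldots,m\}$ into $\ell$ consecutive classes, correspondingly $B = (B_1 \ \cdots\ B_\ell)$ with $B_i \in \mathbb{R}^{n\times m_i}$. Definitions: $\Delta = \Delta_{m_1-1}\times\cdots\times\Delta_{m_\ell-1}$ with $\Delta_{m_i-1} = \{ y \in \mathbb{R}^{m_i}_{\ge} \mid \sum_j y_j = 1\}$; the coefficient set is $P = C \cap \Delta$. For $k \ge 1$, $I_k = \begin{pmatrix} \mathrm{id}_{k-1} \\ -1_{k-1}^{\mathsf T}\end{pmatrix} \in \mathbb{R}^{k\times(k-1)}$, and $I = \mathrm{diag}(I_{m_1},\ldots,I_{m_\ell}) \in \mathbb{R}^{m\times(m-\ell)}$ is block-diagonal. $M = B\,I \in \mathbb{R}^{n\times(m-\ell)}$, the monomial difference subspace is $L = \operatorname{im} M \subseteq \mathbb{R}^n$, and $L^\perp$ its orthogonal complement.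 $J = \mathrm{diag}(1_{m_1}^{\mathsf T},\ldots,1_{m_\ell}^{\mathsf T}) \in \mathbb{R}^{\ell\times m}$ is block-diagonal, $\mathcal{B} = \begin{pmatrix} B \\ J\end{pmatrix} \in \mathbb{R}^{(n+\ell)\times m}$, and the monomial dependency subspace is $D = \ker \mathcal{B} \subseteq \mathbb{R}^m$. *)

(* Defs.v *)
From HB Require Import structures.
From mathcomp Require Import all_boot all_order all_algebra.
From mathcomp Require Import all_classical all_reals all_analysis.
Set Implicit Arguments. Unset Strict Implicit. Unset Printing Implicit Defensive.
Import Order.TTheory GRing.Theory Num.Theory.
Local Open Scope ring_scope.

Section Defs.
Variable R : realType.

Definition posv k (x : 'cV[R]_k) : Prop := forall i, 0 < x i 0.

Definition hprod k (x y : 'cV[R]_k) : 'cV[R]_k := \col_i (x i 0 * y i 0).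
Definition cinv k (x : 'cV[R]_k) : 'cV[R]_k := \col_i (x i 0)^-1.
Definition cexp k (v : 'cV[R]_k) : 'cV[R]_k := \col_i expR (v i 0).

Definition vpow k (x y : 'cV[R]_k) : R := \prod_i (x i 0) `^ (y i 0).
Definition mpow k m (x : 'cV[R]_k) (Y : 'M[R]_(k, m)) : 'cV[R]_m :=
  \col_j \prod_i (x i 0) `^ (Y i j).

Definition is_cone k (S : set 'cV[R]_k) : Prop :=
  forall x t, S x -> 0 < t -> S (t *: x).

Variables (l : nat) (ms : 'I_l -> nat).
Notation m := (\sum_(i < l) ms i)%N.

(* product cone C = C_1 x ... x C_l, blocks of consecutive indices *)
Definition prod_cone (Cs : forall i : 'I_l, set 'cV[R]_(ms i)) : set 'cV[R]_m :=
  [set y | forall i, Cs i (submxcol y i)].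

Definition simplex k : set 'cV[R]_k :=
  [set y | (forall a, 0 <= y a 0) /\ \sum_a y a 0 = 1].

Definition Delta : set 'cV[R]_m := [set y | forall i, simplex (submxcol y i)].

(* I = diag(I_{m_1}, ..., I_{m_l}) in R^{m x (m - l)}, where
   I_k = (id_{k-1} ; -1_{k-1}^T) in R^{k x (k-1)}; the diagonal blocks are
   written entrywise since block (i,j) has type 'M_(ms i, (ms j).-1). *)
Definition Imat : 'M[R]_(m, \sum_(i < l) (ms i).-1) :=
  \mxblock_(i < l, j < l)
    (if i == j then \matrix_(a < ms i, b < (ms j).-1)
                      (if (a == b :> nat) then 1
                       else if (a == (ms i).-1 :> nat) then -1 else 0)
     else 0).

(* J = diag(1_{m_1}^T, ..., 1_{m_l}^T) in R^{l x m} *)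
Definition Jmat : 'M[R]_(l, m) :=
  \mxrow_(j < l) (\matrix_(i < l, b < ms j) (i == j)%:R).

End Defs.

(* Main.v *)
Require Import Defs.
From HB Require Import structures.
From mathcomp Require Import all_boot all_order all_algebra.
From mathcomp Require Import all_classical all_reals all_analysis.
Import Order.TTheory GRing.Theory Num.Theory.
Local Open Scope ring_scope.
Local Open Scope classical_set_scope.

Set Implicit Arguments.
Unset Strict Implicit.
Section Helpers.
Variable R : realType.

Definition lv {k} (x : 'cV[R]_k) : 'cV[R]_k := \col_i ln (x i 0).

Lemma posv_cexp k (a : 'cV[R]_k) : posv (cexp a).
Proof. by move=> i; rewrite mxE expR_gt0. Qed.

Lemma lv_cexp k (a : 'cV[R]_k) : lv (cexp a) = a.
Proof. by apply/matrixP => i j; rewrite !mxE expRK ord1. Qed.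

Lemma cexp_lv k (x : 'cV[R]_k) : posv x -> cexp (lv x) = x.
Proof. by move=> px; apply/matrixP => i j; rewrite !mxE ord1 lnK // posrE px. Qed.

Lemma hprod_cexp k (a b : 'cV[R]_k) : hprod (cexp a) (cexp b) = cexp (a + b).
Proof. by apply/matrixP => i j; rewrite !mxE expRD. Qed.

Lemma cinv_cexp k (a : 'cV[R]_k) : cinv (cexp a) = cexp (- a).
Proof. by apply/matrixP => i j; rewrite !mxE expRN. Qed.

Lemma mpow_cexp k m (a : 'cV[R]_k) (Y : 'M[R]_(k, m)) :
  mpow (cexp a) Y = cexp (Y^T *m a).
Proof.
apply/matrixP => i j; rewrite !mxE expR_sum; apply: eq_bigr => r _.
rewrite !mxE /powR gt_eqF ?expR_gt0 // expRK.
by rewrite mulrC.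
Qed.

Lemma vpow_cexp k (a z : 'cV[R]_k) : vpow (cexp a) z = expR ((z^T *m a) 0 0).
Proof.
rewrite /vpow !mxE expR_sum; apply: eq_bigr => r _.
by rewrite !mxE /powR gt_eqF ?expR_gt0 // expRK mulrC.
Qed.


Lemma colsum_w k' (b : 'I_k') (f : 'I_k'.+1 -> R) :
  \sum_(a < k'.+1) (if (a == b :> nat) then 1 else if (a == k' :> nat) then -1 else 0) * f a
  = f (widen_ord (leqnSn _) b) - f ord_max.
Proof.
rewrite big_ord_recr /= eqxx (gtn_eqF (ltn_ord b)) mulN1r; congr (_ + _).
rewrite (bigD1 b) //= eqxx mul1r big1 ?addr0 //.
move=> a /negbTE hab; have -> : (nat_of_ord a == nat_of_ord b) = false := hab.
by rewrite (ltn_eqF (ltn_ord a)) mul0r.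
Qed.

Definition blk k : 'M[R]_(k, k.-1) := \matrix_(a < k, b < k.-1)
  (if (a == b :> nat) then 1 else if (a == k.-1 :> nat) then -1 else 0).

Lemma blk_colsum k (r : R) (b : 'I_k.-1) : \sum_(a < k) r * (if (a == b :> nat) then 1 else if (a == k.-1 :> nat) then -1 else 0) = 0 :> R.
Proof.
move: b; case: k => [|k'] b; first by case: b.
have H := colsum_w b (fun _ : 'I_k'.+1 => 1); rewrite subrr in H.
rewrite (eq_bigr _ (fun a _ => mulr1 _)) in H.
rewrite -mulr_sumr.
by rewrite H mulr0.
Qed.

Lemma blk_ker k (v : 'cV[R]_k) (hk : (0 < k)%N) : (blk k)^T *m v = 0 ->
  forall a, v a 0 = v (Ordinal (eq_ind_r is_true hk (ltn_predL k))) 0.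
Proof.
case: k v hk => [//|k'] v hk h a.
have -> : Ordinal (eq_ind_r is_true hk (ltn_predL k'.+1)) = ord_max by apply: val_inj.
have [ha|ha] := ltnP a k'; last first.
  by congr (v _ 0); apply: val_inj; apply/eqP; rewrite eqn_leq ha -ltnS ltn_ord.
have := congr1 (fun M : 'M[R]_(k', 1) => M (Ordinal ha) 0) h; rewrite !mxE.
under eq_bigr do rewrite !mxE.
rewrite colsum_w => /eqP; rewrite subr_eq0 => /eqP <-.
by congr (v _ 0); apply: val_inj.
Qed.


Section Blocks.
Variables (l : nat) (ms : 'I_l -> nat).
Local Notation m := (\sum_(i < l) ms i)%N.

Lemma JI0 : Jmat R ms *m Imat R ms = 0.
Proof.
rewrite /Jmat /Imat mul_mxrow_mxblock.
apply/mxrowP => j; rewrite mxrowK submxrow0.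
rewrite (bigD1 j) //= eqxx big1 ?addr0; last first.
  by move=> i /negbTE ->; rewrite mulmx0.
apply/matrixP => r b; rewrite !mxE.
under eq_bigr do rewrite !mxE.
exact: (blk_colsum ((r == j)%:R) b).
Qed.

Lemma JT_sub (t : 'cV[R]_l) i : submxcol ((Jmat R ms)^T *m t) i = const_mx (t i 0).
Proof.
rewrite /Jmat tr_mxrow mxcol_mul mxcolK.
apply/matrixP => a z; rewrite !mxE.
rewrite (bigD1 i) //= !mxE eqxx mul1r big1 ?addr0 ?ord1 //.
by move=> r /negbTE hr; rewrite !mxE hr mul0r.
Qed.

Lemma kerIT (hms : forall i, (0 < ms i)%N) (u : 'cV[R]_m) :
  (Imat R ms)^T *m u = 0 -> exists t : 'cV[R]_l, u = (Jmat R ms)^T *m t.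
Proof.
move=> h.
have hb i : (blk (ms i))^T *m submxcol u i = 0.
  move: h; rewrite -{1}(submxcolK u) /Imat tr_mxblock mul_mxblock_mxrow => h.
  have := congr1 (fun M => submxcol M i) h; rewrite /= mxcolK submxcol0.
  rewrite (bigD1 i) //= eqxx big1 ?addr0 //.
  by move=> j /negbTE; rewrite eq_sym => ->; rewrite trmx0 mul0mx.
exists (\col_i (submxcol u i) (Ordinal (eq_ind_r is_true (hms i) (ltn_predL (ms i)))) 0).
apply/mxcolP => i; rewrite JT_sub.
apply/matrixP => a z; rewrite ord1 [RHS]mxE [RHS]mxE.
exact: (blk_ker (hms i) (hb i) a).
Qed.

Lemma submxcol_hprod (a b : 'cV[R]_m) i :
  submxcol (hprod a b) i = hprod (submxcol a i) (submxcol b i).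
Proof. by apply/matrixP => x y; rewrite !mxE. Qed.

Lemma submxcol_cexp (a : 'cV[R]_m) i : submxcol (cexp a) i = cexp (submxcol a i).
Proof. by apply/matrixP => x y; rewrite !mxE. Qed.

Lemma submxcol_scale (y : 'cV[R]_m) (t : 'cV[R]_l) i :
  submxcol (hprod y (cexp ((Jmat R ms)^T *m t))) i = expR (t i 0) *: submxcol y i.
Proof.
rewrite submxcol_hprod submxcol_cexp JT_sub.
by apply/matrixP => x z; rewrite !mxE ord1 mulrC.
Qed.

Lemma cone_scale (Cs : forall i : 'I_l, set 'cV[R]_(ms i)) y t :
  (forall i, is_cone (Cs i)) -> prod_cone Cs y ->
  prod_cone Cs (hprod y (cexp ((Jmat R ms)^T *m t))).
Proof.
move=> hc hy i; rewrite submxcol_scale; exact: hc _ _ (hy i) (expR_gt0 _).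
Qed.

Lemma cone_pos (Cs : forall i : 'I_l, set 'cV[R]_(ms i)) y :
  (forall i, Cs i `<=` [set x | posv x]) -> prod_cone Cs y -> posv y.
Proof.
move=> hp hy k; rewrite -(submxcolK y) mxE.
exact: (hp _ _ (hy _)).
Qed.

Lemma normalize (hms : forall i, (0 < ms i)%N)
  (Cs : forall i : 'I_l, set 'cV[R]_(ms i)) q :
  (forall i, Cs i `<=` [set x | posv x]) -> prod_cone Cs q ->
  exists t, Delta (hprod q (cexp ((Jmat R ms)^T *m t))).
Proof.
move=> hp hq.
exists (\col_i (- ln (\sum_a submxcol q i a 0))) => i.
rewrite submxcol_scale mxE expRN.
have pq : posv (submxcol q i) := hp _ _ (hq i).
have sp : 0 < \sum_a submxcol q i a 0.
  pose a0 : 'I_(ms i) := Ordinal (hms i).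
  rewrite (bigD1 a0) //=; apply: (lt_le_trans (pq a0)).
  by rewrite lerDl sumr_ge0 // => a _; exact/ltW.
rewrite lnK ?posrE //; split.
  by move=> a; rewrite mxE mulr_ge0 // ?invr_ge0 ltW // pq.
under eq_bigr do rewrite mxE.
by rewrite -mulr_sumr mulVf // gt_eqF.
Qed.

End Blocks.

Lemma rowspace p k (A : 'M[R]_(p, k)) (w : 'cV[R]_k) :
  (forall z : 'cV[R]_k, A *m z = 0 -> z^T *m w = 0) -> exists r : 'cV[R]_p, w = A^T *m r.
Proof.
move=> h.
have h0 : w^T *m cokermx A = 0.
  apply/matrixP => i j.
  have hz : A *m col j (cokermx A) = 0 by rewrite colE mulmxA mulmx_coker mul0mx.
  have := congr1 (fun M : 'M[R]_1 => M 0 0) (h _ hz).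
  rewrite !mxE ord1 => H; rewrite -[X in _ = X]H.
  by apply: eq_bigr => x _; rewrite !mxE mulrC.
have /submxP [D hD] : (w^T <= A)%MS by rewrite submxE h0.
by exists D^T; rewrite -trmx_mul -hD trmxK.
Qed.


Lemma perp_eq p k (M : 'M[R]_(p, k)) (v : 'cV[R]_p) (w : 'cV[R]_k) :
  \sum_x v x 0 * (M *m w) x 0 = ((M^T *m v)^T *m w) 0 0.
Proof.
rewrite trmx_mul trmxK -mulmxA mxE.
by apply: eq_bigr => x _; rewrite [v^T 0 x]mxE.
Qed.

Lemma zmod_shuffle (V : zmodType) (a b c d : V) : d = b - (c - a) -> a + b = c + d.
Proof. by move=> ->; rewrite opprB addrCA [c + _]addrC subrK addrC. Qed.

End Helpers.
Unset Implicit Arguments.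
Set Strict Implicit.

Theorem theorem4 (R : realType) (n l : nat) (ms : 'I_l -> nat)
  (B : 'M[R]_(n, \sum_(i < l) ms i))
  (c : 'cV[R]_(\sum_(i < l) ms i))
  (Cs : forall i : 'I_l, set 'cV[R]_(ms i))
  (Mstar : 'M[R]_(\sum_(i < l) (ms i).-1, n)) :
  (forall i, (0 < ms i)%N) ->
  posv c ->
  (forall i, is_cone (Cs i)) ->
  (forall i, Cs i `<=` [set x | posv x]) ->
  prod_cone Cs !=set0 ->
  let C := prod_cone Cs in
  let P := C `&` @Delta R l ms in
  let M := B *m @Imat R l ms in
  M *m Mstar *m M = M ->
  let E := @Imat R l ms *m Mstar in
  let calB := col_mx B (@Jmat R l ms) in
  let D := [set z : 'cV[R]_(\sum_(i < l) ms i) | calB *m z = 0] in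
  let L := [set M *m w | w in [set: 'cV[R]_(\sum_(i < l) (ms i).-1)]] in
  let Lperp := [set v : 'cV[R]_n | forall u, L u -> \sum_k v k 0 * u k 0 = 0] in
  let Zc := [set x : 'cV[R]_n | posv x /\ C (hprod c (mpow x B))] in
  let Yc := [set y | P y /\ forall z, D z -> vpow y z = vpow c z] in
  Zc = [set hprod (mpow (hprod y (cinv c)) E) (cexp v) | y in Yc & v in Lperp].
Proof.
move=> hms hc hcone hpos hne C P M hM E calB D L Lperp Zc Yc.
have MT : M^T = (Imat R ms)^T *m B^T by rewrite /M trmx_mul.
have ET : E^T = Mstar^T *m (Imat R ms)^T by rewrite /E trmx_mul.
have JI : (Imat R ms)^T *m (Jmat R ms)^T = 0 by rewrite -trmx_mul JI0 trmx0.
have key : M^T *m Mstar^T *m M^T = M^T by rewrite -mulmxA -!trmx_mul hM.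
have hDz z : D z -> B *m z = 0 /\ Jmat R ms *m z = 0.
  move=> Dz; apply/eq_col_mx; rewrite -mul_col_mx col_mx0; exact: Dz.
pose lc := lv c.
have ca : c = cexp lc by rewrite cexp_lv.
apply/seteqP; split.
- move=> x [px hC].
  pose a := lv x.
  have xa : x = cexp a by rewrite cexp_lv.
  have hq : hprod c (mpow x B) = cexp (lc + B^T *m a).
    by rewrite {1}xa {1}ca mpow_cexp hprod_cexp.
  have [t Dt] := normalize hms hpos hC.
  set y := hprod (hprod c (mpow x B)) (cexp ((Jmat R ms)^T *m t)).
  have ye : y = cexp (lc + (B^T *m a + (Jmat R ms)^T *m t)).
    by rewrite /y hq hprod_cexp addrA.
  exists y.
    split; first by split; [exact: cone_scale | exact: Dt].
    move=> z /hDz [Bz Jz]; rewrite ye ca !vpow_cexp; congr expR.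
    by rewrite !mulmxDr !mulmxA -!trmx_mul Bz Jz !trmx0 !mul0mx !addr0.
  exists (a - E^T *m (B^T *m a + (Jmat R ms)^T *m t)).
    move=> u [w _ <-]; rewrite perp_eq.
    have Is : (Imat R ms)^T *m (B^T *m a + (Jmat R ms)^T *m t) = M^T *m a.
      by rewrite mulmxDr !mulmxA -MT JI mul0mx addr0.
    have hE : M^T *m (E^T *m (B^T *m a + (Jmat R ms)^T *m t)) = M^T *m a.
      by rewrite ET -(mulmxA Mstar^T) Is !mulmxA key.
    by rewrite mulmxBr hE subrr trmx0 mul0mx mxE.
  rewrite ye ca cinv_cexp hprod_cexp mpow_cexp hprod_cexp xa; congr cexp.
  by rewrite (addrC lc) addrK addrC subrK.
- move=> _ [y [[Cy Dely] hy] [v hv <-]].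
  have py := cone_pos hpos Cy.
  pose w := lv y - lc.
  have yw : hprod y (cinv c) = cexp w.
    by rewrite -{1}(cexp_lv py) {1}ca cinv_cexp hprod_cexp.
  rewrite yw mpow_cexp hprod_cexp.
  split; first exact: posv_cexp.
  rewrite {1}ca mpow_cexp hprod_cexp.
  have MTv : M^T *m v = 0.
    apply/matrixP => j z; rewrite ord1.
    have := hv (M *m delta_mx j 0) (ex_intro2 _ _ (delta_mx j 0) I erefl).
    by rewrite perp_eq -colE !mxE.
  have [r hr] : exists r, w = calB^T *m r.
    apply: rowspace => z Dz.
    have := hy z Dz; rewrite -{1}(cexp_lv py) ca !vpow_cexp => /expR_inj H.
    by rewrite /w mulmxBr (mx11_scalar (z^T *m lv y)) (mx11_scalar (z^T *m lc)) H subrr.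
  have Iw : (Imat R ms)^T *m w = M^T *m usubmx r.
    rewrite hr /calB tr_col_mx -{1}(vsubmxK r) mul_row_col mulmxDr !mulmxA -MT JI.
    by rewrite mul0mx addr0.
  pose u := B^T *m (E^T *m w + v) - w.
  have hIu : (Imat R ms)^T *m u = 0.
    have e1 : M^T *m (Mstar^T *m (Imat R ms)^T *m w) = (Imat R ms)^T *m w.
      by rewrite -mulmxA Iw !mulmxA key.
    by rewrite /u mulmxBr mulmxA -MT mulmxDr MTv addr0 ET e1 subrr.
  have [t ht] := kerIT hms hIu.
  have e : lc + B^T *m (E^T *m w + v) = lv y + (Jmat R ms)^T *m t.
    by apply: zmod_shuffle; rewrite -ht.
  rewrite e -hprod_cexp cexp_lv //; exact: cone_scale.
Qed.
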